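(* Let $G$ be a simple graph with at least one edge, with maximum degree $\Delta(G)$, number of edges $|E(G)|$, and matching number $\nu(G)$, and let $r\ge1$. Then the PIR capacity of the $r$-multigraph $G^{(r)}$ satisfies $$\mathscr{C}\left(G^{(r)}\right)\ \le\ \min\left(\frac{\Delta(G)}{|E(G)|},\ \frac{1}{\nu(G)}\right)\cdot \frac{1}{2-2^{1-r}}.$$
   Context: Multigraph-based PIR model. There are $N$ non-colluding servers $S_1,\dots,S_N$. Let $G$ be a simple graph on vertex set $\{S_1,\dots,S_N\}$ with $K'$ edges, and let $G^{(r)}$ denote the $r$-multigraph obtained by replacing every edge of $G$ by $r$ parallel edges. There are $K=rK'$ files $W_{s,t}$, $(s,t)\in[K']\times[r]$, each chosen independently and uniformly from $\mathbb{F}_2^{L}$; the files $W_{s,1},\dots,W_{s,r}$ are stored exactly on the two endpoints of the $s$-th edge of $G$. Let $\mathcal{W}$ be the set of all files and $\mathcal{W}_{S_i}$ the set of files stored on $S_i$. In a PIR scheme, a user privately chooses a desired index $\theta$ and generates queries $Q_1,\dots,Q_N$ independent of all files; server $S_i$ returns an answer $A_i$ that is a deterministic function of $Q_i$ and $\mathcal{W}_{S_i}$. Reliability: $H(W_\theta\mid A_1,\dots,A_N,Q_1,\dots,Q_N)=0$. Privacy: for every $i$ and every $\theta$, the distribution of $(Q_i^{(\theta)},A_i^{(\theta)},\mathcal{W}_{S_i})$ does not depend on $\theta$. The rate of a scheme is $L/\sum_{i=1}^N H(A_i)$, and $\mathscr{C}(G^{(r)})$ is the supremum of rates over all schemes,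 with $L$ arbitrarily large. A matching of $G$ is a set of pairwise vertex-disjoint edges; $\nu(G)$ is the maximum size of a matching. *)

(* Defs.v *)
From HB Require Import structures.
From mathcomp Require Import all_boot all_order all_algebra.
From mathcomp Require Import classical_sets reals ereal exp.
Set Implicit Arguments. Unset Strict Implicit. Unset Printing Implicit Defensive.
Import Order.TTheory GRing.Theory Num.Theory.
Local Open Scope ring_scope.

Definition pmf {R : realType} {Om T : finType} (P : Om -> R) (X : Om -> T) (t : T) : R :=
  \sum_(o | X o == t) P o.

Definition log2 {R : realType} (x : R) : R := ln x / ln 2.

Definition entropy {R : realType} {Om T : finType} (P : Om -> R) (X : Om -> T) : R :=
  - \sum_(t : T) (if pmf P X t == 0 then 0 else pmf P X t * log2 (pmf P X t)).

Definition cond_entropy {R : realType} {Om T T' : finType} (P : Om -> R)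
  (X : Om -> T) (Y : Om -> T') : R :=
  entropy P (fun o => (X o, Y o)) - entropy P Y.

(* A graph on vertex set 'I_N with K' edges, the s-th edge having endpoint set ends s. *)
Definition simple_graph (N K' : nat) (ends : 'I_K' -> {set 'I_N}) : Prop :=
  (forall s, #|ends s| = 2) /\ injective ends.

Definition degree (N K' : nat) (ends : 'I_K' -> {set 'I_N}) (v : 'I_N) : nat :=
  #|[set s | v \in ends s]|.

Definition max_degree (N K' : nat) (ends : 'I_K' -> {set 'I_N}) : nat :=
  \max_(v : 'I_N) degree ends v.

Definition is_matching (N K' : nat) (ends : 'I_K' -> {set 'I_N}) (M : {set 'I_K'}) : bool :=
  [forall s in M, forall t in M, (s != t) ==> [disjoint ends s & ends t]].

Definition matching_number (N K' : nat) (ends : 'I_K' -> {set 'I_N}) : nat :=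
  \max_(M : {set 'I_K'} | is_matching ends M) #|M|.

(* file W_{s,t} is indexed by (s,t) : 'I_K' * 'I_r *)
Definition fidx (K' r : nat) := ('I_K' * 'I_r)%type.
Definition files (K' r L : nat) := {ffun fidx K' r -> 'rV['F_2]_L}.

(* W_{S_i}: the files stored on server i (other coordinates blanked to 0) *)
Definition stored_at (N K' r L : nat) (ends : 'I_K' -> {set 'I_N}) (i : 'I_N)
  (w : files K' r L) : files K' r L :=
  [ffun k => if i \in ends k.1 then w k else 0].

Definition jointP {R : realType} (K' r L : nat) (U : finType) (pU : U -> R)
  (o : U * files K' r L) : R :=
  pU o.1 / #|{: files K' r L}|%:R.

(* A scheme: user randomness u ~ pU; query to server i for desired index th is
   q th i u; answer of server i is ans i (query) (files), depending only on the
   files stored on server i. *)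
Definition PIR_scheme {R : realType} (N K' r : nat) (ends : 'I_K' -> {set 'I_N}) (L : nat)
  (U : finType) (pU : U -> R) (Qt At : finType)
  (q : fidx K' r -> 'I_N -> U -> Qt) (ans : 'I_N -> Qt -> files K' r L -> At) : Prop :=
  [/\ (forall u, 0 <= pU u),
      \sum_u pU u = 1,
      (forall i qv (w w' : files K' r L),
          (forall k, i \in ends k.1 -> w k = w' k) -> ans i qv w = ans i qv w'),
      (forall th, cond_entropy (jointP pU) (fun o => o.2 th)
          (fun o => ([ffun i => ans i (q th i o.1) o.2], [ffun i => q th i o.1])) = 0) &
      (forall i th th' x,
          pmf (jointP pU) (fun o => (q th i o.1, ans i (q th i o.1) o.2, stored_at ends i o.2)) x
        = pmf (jointP pU) (fun o => (q th' i o.1, ans i (q th' i o.1) o.2, stored_at ends i o.2)) x)].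

(* rate L / sum_i H(A_i) (H(A_i) computed for desired index th; by privacy it
   does not depend on th) *)
Definition PIR_rate {R : realType} (N K' r : nat) (L : nat) (U : finType) (pU : U -> R)
  (Qt At : finType) (q : fidx K' r -> 'I_N -> U -> Qt)
  (ans : 'I_N -> Qt -> files K' r L -> At) (th : fidx K' r) : R :=
  L%:R / \sum_(i : 'I_N) entropy (jointP pU) (fun o => ans i (q th i o.1) o.2).

Definition PIR_capacity (R : realType) (N K' : nat) (ends : 'I_K' -> {set 'I_N}) (r : nat)
  : \bar R :=
  ereal_sup [set x : \bar R | exists (L : nat) (U : finType) (pU : U -> R)
      (Qt At : finType) (q : fidx K' r -> 'I_N -> U -> Qt)
      (ans : 'I_N -> Qt -> files K' r L -> At) (th : fidx K' r),
      [/\ (0 < L)%N, PIR_scheme ends pU q ans & x = (PIR_rate pU q ans th)%:E]].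

(* Main.v *)
Require Import Defs.
From HB Require Import structures.
From mathcomp Require Import all_boot all_order all_algebra.
From mathcomp Require Import classical_sets reals ereal exp.
From mathcomp Require Import ring lra.
Import Order.TTheory GRing.Theory Num.Theory.
Local Open Scope ring_scope.
Set Implicit Arguments. Unset Strict Implicit. Unset Printing Implicit Defensive.

Section Ent.
Variables (R : realType) (Om : finType) (P : Om -> R).
Hypothesis P0 : forall o, 0 <= P o.
Hypothesis P1 : \sum_o P o = 1.

Definition det (T T' : Type) (X : Om -> T) (Y : Om -> T') :=
  forall o o', Y o = Y o' -> X o = X o'.

Lemma ln2_gt0 : 0 < ln (2 : R).
Proof. by apply: ln_gt0; rewrite ltr1n. Qed.

Lemma pmf_ge0 (T : finType) (X : Om -> T) t : 0 <= pmf P X t.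
Proof. by rewrite /pmf; apply: sumr_ge0 => o _. Qed.

Lemma pmf_le1 (T : finType) (X : Om -> T) t : pmf P X t <= 1.
Proof.
rewrite /pmf -P1 [X in _ <= X](bigID (fun o => X o == t)) /= lerDl.
by apply: sumr_ge0 => o _.
Qed.

Lemma pmf_ge (T : finType) (X : Om -> T) o : P o <= pmf P X (X o).
Proof.
by rewrite /pmf (bigD1 o) //= lerDl; apply: sumr_ge0 => i _.
Qed.

Lemma pmf_pos (T : finType) (X : Om -> T) o : 0 < P o -> 0 < pmf P X (X o).
Proof. by move=> h; apply: lt_le_trans h (pmf_ge X o). Qed.

Lemma pmf_le_det (T T' : finType) (X : Om -> T) (Y : Om -> T') o :
  det X Y -> pmf P Y (Y o) <= pmf P X (X o).
Proof.
move=> dXY; rewrite /pmf [X in _ <= X]big_mkcond [X in X <= _]big_mkcond /=.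
apply: ler_sum => i _.
case: eqP => [/esym/dXY ->|_]; first by rewrite eqxx.
by case: ifP.
Qed.

Lemma sum_comp (T : finType) (X : Om -> T) (g : T -> R) :
  \sum_o P o * g (X o) = \sum_t pmf P X t * g t.
Proof.
rewrite (partition_big X predT) //=; apply: eq_bigr => t _.
rewrite /pmf big_distrl /=; apply: eq_bigr => o /eqP <-. done.
Qed.

Lemma ent_omega (T : finType) (X : Om -> T) :
  entropy P X = - (\sum_o P o * ln (pmf P X (X o))) / ln 2.
Proof.
rewrite (sum_comp X (fun t => ln (pmf P X t))) /entropy mulNr; congr (- _).
rewrite big_distrl /=; apply: eq_bigr => t _.
case: eqP => [->|_]; first by rewrite !mul0r.
by rewrite /log2 mulrA.
Qed.

Lemma ent_le_det (T T' : finType) (X : Om -> T) (Y : Om -> T') :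
  det X Y -> entropy P X <= entropy P Y.
Proof.
move=> dXY; rewrite !ent_omega ler_pM2r ?invr_gt0 ?ln2_gt0 // lerN2.
apply: ler_sum => o _.
have [->|Po] := eqVneq (P o) 0; first by rewrite !mul0r.
have Pp : 0 < P o by rewrite lt_def Po P0.
by rewrite ler_wpM2l ?P0 // ler_ln ?pmf_le_det // posrE pmf_pos.
Qed.

Lemma ent_eq_det (T T' : finType) (X : Om -> T) (Y : Om -> T') :
  det X Y -> det Y X -> entropy P X = entropy P Y.
Proof. by move=> h1 h2; apply/eqP; rewrite eq_le !ent_le_det. Qed.

Lemma ent_ge0 (T : finType) (X : Om -> T) : 0 <= entropy P X.
Proof.
rewrite ent_omega mulNr oppr_ge0 pmulr_lle0 ?invr_gt0 ?ln2_gt0 //.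
apply: sumr_le0 => o _.
have [->|Po] := eqVneq (P o) 0; first by rewrite !mul0r.
have Pp : 0 < P o by rewrite lt_def Po P0.
by rewrite pmulr_rle0 // ln_le0 // pmf_le1.
Qed.

Lemma ent_indep (T T' : finType) (X : Om -> T) (Y : Om -> T') :
  (forall x y, pmf P (fun o => (X o, Y o)) (x, y) = pmf P X x * pmf P Y y) ->
  entropy P (fun o => (X o, Y o)) = entropy P X + entropy P Y.
Proof.
move=> hind; rewrite !ent_omega -mulrDl -opprD -big_split /=; congr (- _ / _).
apply: eq_bigr => o _.
have [->|Po] := eqVneq (P o) 0; first by rewrite !mul0r addr0.
have Pp : 0 < P o by rewrite lt_def Po P0.
by rewrite -mulrDr hind lnM // posrE pmf_pos.
Qed.

Lemma marg (T T' : finType) (X : Om -> T) (Z : Om -> T') z :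
  \sum_x pmf P (fun o => (X o, Z o)) (x, z) = pmf P Z z.
Proof.
rewrite /pmf (partition_big X predT) //=; apply: eq_bigr => x _.
by apply: eq_bigl => o; rewrite xpair_eqE andbC.
Qed.

Lemma pmf_sum (T : finType) (X : Om -> T) : \sum_t pmf P X t = 1.
Proof.
rewrite -P1; transitivity (\sum_t pmf P X t * 1).
  by apply: eq_bigr => t _; rewrite mulr1.
by rewrite -(sum_comp X (fun _ => 1)); apply: eq_bigr => t _; rewrite mulr1.
Qed.

End Ent.

Lemma pmf_comp (R : realType) (Om T T' : finType) (P : Om -> R) (V : Om -> T) (g : T -> T') t :
  pmf P (fun o => g (V o)) t = \sum_(v | g v == t) pmf P V v.
Proof.
rewrite /pmf (partition_big V (fun v => g v == t)) /=; last by move=> o.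
apply: eq_bigr => v /eqP gv; apply: eq_bigl => o.
apply/idP/idP => [/andP[_ //]|/eqP Vo]; by rewrite Vo gv !eqxx.
Qed.

Lemma ent_pmf_eq (R : realType) (Om T : finType) (P P' : Om -> R) (V V' : Om -> T) :
  (forall t, pmf P V t = pmf P' V' t) -> entropy P V = entropy P' V'.
Proof. by move=> h; rewrite /entropy; congr (- _); apply: eq_bigr => t _; rewrite h. Qed.

Section Sub.
Variables (R : realType) (Om : finType) (P : Om -> R).
Hypothesis P0 : forall o, 0 <= P o.
Hypothesis P1 : \sum_o P o = 1.

Lemma ln_le_sub1 (x : R) : 0 < x -> ln x <= x - 1.
Proof.
move=> x0; have := @le_ln1Dx R (x - 1); rewrite addrCA subrr addr0; apply.
by rewrite ltrBrDl subrr.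
Qed.

Lemma sum_q_le1 (T1 T2 T3 : finType) (X : Om -> T1) (Y : Om -> T2) (Z : Om -> T3) :
  \sum_o P o * (pmf P (fun o => (X o, Z o)) (X o, Z o) * pmf P (fun o => (Y o, Z o)) (Y o, Z o)
     / (pmf P (fun o => (X o, Y o, Z o)) (X o, Y o, Z o) * pmf P Z (Z o))) <= 1.
Proof.
pose pXZ := pmf P (fun o => (X o, Z o)); pose pYZ := pmf P (fun o => (Y o, Z o)).
pose pXYZ := pmf P (fun o => (X o, Y o, Z o)); pose pZ := pmf P Z.
pose g (v : T1 * T2 * T3) := pXZ (v.1.1, v.2) * pYZ (v.1.2, v.2) / (pXYZ v * pZ v.2).
pose h (v : T1 * T2 * T3) := pXZ (v.1.1, v.2) * pYZ (v.1.2, v.2) / pZ v.2.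
have -> := sum_comp P (fun o => (X o, Y o, Z o)) g.
apply: (@le_trans _ _ (\sum_v h v)).
  apply: ler_sum => v _; rewrite /g /h -/pXYZ.
  have [->|nz] := eqVneq (pXYZ v) 0.
    by rewrite mul0r divr_ge0 ?mulr_ge0 ?pmf_ge0.

  rewrite invfM.
  have hh : forall a b c : R, a != 0 -> a * (b * (a^-1 * c)) = b * c.
    by move=> a b c a0; rewrite mulrCA (mulrA a) mulfV // mul1r.
  by rewrite hh.
have -> : \sum_v h v = \sum_z pZ z.
  rewrite -(pair_bigA _ (fun a z => h (a, z))) /=.
  rewrite -(pair_bigA _ (fun x y => \sum_z h (x, y, z))) /=.
  under eq_bigr do rewrite exchange_big /=.
  rewrite exchange_big /=; apply: eq_bigr => z _.
  transitivity ((\sum_x pXZ (x, z)) * (\sum_y pYZ (y, z)) / pZ z).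
    rewrite mulr_suml mulr_suml; apply: eq_bigr => x _.
    rewrite mulr_sumr mulr_suml; apply: eq_bigr => y _.
    by rewrite /h.
  rewrite /pXZ /pYZ !marg -/pZ.
  have [->|nz] := eqVneq (pZ z) 0; first by rewrite !mul0r.
  by rewrite mulfK.
by rewrite pmf_sum.
Qed.

Lemma ent_submod (T1 T2 T3 : finType) (X : Om -> T1) (Y : Om -> T2) (Z : Om -> T3) :
  entropy P (fun o => (X o, Y o, Z o)) + entropy P Z <=
  entropy P (fun o => (X o, Z o)) + entropy P (fun o => (Y o, Z o)).
Proof.
rewrite !ent_omega -!mulrDl ler_pM2r ?invr_gt0 ?ln2_gt0 //.
set a := \sum_o _ * ln (pmf P (fun o => (X o, Y o, Z o)) _).
set d := \sum_o _ * ln (pmf P Z _).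
set b := \sum_o _ * ln (pmf P (fun o => (X o, Z o)) _).
set c := \sum_o _ * ln (pmf P (fun o => (Y o, Z o)) _).
suff key : b + c - a - d <= 0.
  by rewrite -!opprD lerN2 -subr_le0 opprD addrA.
have -> : b + c - a - d = \sum_o P o * (ln (pmf P (fun o => (X o, Z o)) (X o, Z o))
    + ln (pmf P (fun o => (Y o, Z o)) (Y o, Z o))
    - ln (pmf P (fun o => (X o, Y o, Z o)) (X o, Y o, Z o)) - ln (pmf P Z (Z o))).
  rewrite /a /b /c /d -big_split -!sumrB /=; apply: eq_bigr => o _.
  by rewrite !mulrBr mulrDr.
apply: (@le_trans _ _ (\sum_o P o * (pmf P (fun o => (X o, Z o)) (X o, Z o) * pmf P (fun o => (Y o, Z o)) (Y o, Z o)
     / (pmf P (fun o => (X o, Y o, Z o)) (X o, Y o, Z o) * pmf P Z (Z o)) - 1))).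
  apply: ler_sum => o _.
  have [->|Po] := eqVneq (P o) 0; first by rewrite !mul0r.
  have Pp : 0 < P o by rewrite lt_def Po P0.
  rewrite ler_wpM2l ?P0 //.
  have h1 := pmf_pos P0 (fun o => (X o, Z o)) Pp.
  have h2 := pmf_pos P0 (fun o => (Y o, Z o)) Pp.
  have h3 := pmf_pos P0 (fun o => (X o, Y o, Z o)) Pp.
  have h4 := pmf_pos P0 Z Pp.
  rewrite -addrA -opprD -lnM ?posrE // -lnM ?posrE // -ln_div ?posrE ?mulr_gt0 //.
  by apply: ln_le_sub1; rewrite divr_gt0 ?mulr_gt0.
under eq_bigr do rewrite mulrBr mulr1.
by rewrite sumrB P1 subr_le0 sum_q_le1.
Qed.
End Sub.

Section PIR.
Variables (R : realType) (N K' r L : nat) (ends : 'I_K' -> {set 'I_N}) (U : finType)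
  (pU : U -> R) (Qt At : finType) (q : fidx K' r -> 'I_N -> U -> Qt)
  (ans : 'I_N -> Qt -> files K' r L -> At).
Hypothesis pU0 : forall u, 0 <= pU u.
Hypothesis pU1 : \sum_u pU u = 1.

Local Notation Om := (U * files K' r L)%type.
Local Notation P := (@jointP R K' r L U pU).
Local Notation H := (@entropy R Om _ P).

Lemma card_files_gt0 : (0 < #|{: files K' r L}|)%N.
Proof. by apply/card_gt0P; exists 0. Qed.

Lemma P0 : forall o : Om, 0 <= P o.
Proof. by move=> o; rewrite /jointP divr_ge0 ?pU0. Qed.

Lemma P1 : \sum_(o : Om) P o = 1.
Proof.
rewrite -pU1 -(pair_bigA _ (fun u w => @jointP R K' r L U pU (u, w))) /=.
apply: eq_bigr => u _; rewrite /jointP /= sumr_const -mulrnAr -[_^-1 *+ _]mulr_natl mulfV ?mulr1 //.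
by rewrite pnatr_eq0 -lt0n card_files_gt0.
Qed.

Definition mg (S : pred (fidx K' r)) (o o' : Om) : Om :=
  (o.1, [ffun s => if S s then o.2 s else o'.2 s]).

Lemma mgK S o o' : mg S (mg S o o') (mg S o' o) = o.
Proof.
case: o => u w; rewrite /mg /=; congr (_, _); apply/ffunP => s; rewrite !ffunE.
by case: (S s).
Qed.

Lemma indep_gen (T T' : finType) (S : pred (fidx K' r)) (X : Om -> T) (Y : Om -> T') :
  (forall o o' : Om, o.1 = o'.1 -> (forall s, S s -> o.2 s = o'.2 s) -> X o = X o') ->
  (forall o o' : Om, (forall s, ~~ S s -> o.2 s = o'.2 s) -> Y o = Y o') ->
  H (fun o => (X o, Y o)) = H X + H Y.
Proof.
move=> hX hY; apply: ent_indep; first exact: P0.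
move=> x y.
have eX (o o' : Om) : X (mg S o o') = X o.
  by apply: hX => // s Ss; rewrite /mg /= ffunE Ss.
have eY (o o' : Om) : Y (mg S o' o) = Y o.
  by apply: hY => s Ss; rewrite /mg /= ffunE (negbTE Ss).
pose F (p : Om * Om) := (if X p.1 == x then P p.1 else 0) * (if Y p.2 == y then P p.2 else 0).
pose phi (p : Om * Om) := (mg S p.1 p.2, mg S p.2 p.1).
have phiK : cancel phi phi by case=> o o'; rewrite /phi /= !mgK.
transitivity (\sum_p F (phi p)).
  rewrite /pmf big_mkcond /= -[LHS]mulr1 -P1 big_distrl /=.
  rewrite -(pair_bigA _ (fun o o' => F (phi (o, o')))) /=.
  apply: eq_bigr => o _; rewrite big_distrr /=; apply: eq_bigr => o' _.
  rewrite /F /phi /= eX eY xpair_eqE.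
  by case: (X o == x); case: (Y o == y); rewrite /= ?mul0r ?mulr0.
rewrite (reindex_inj (can_inj phiK)) /=.
under eq_bigr do rewrite phiK.
rewrite -(pair_bigA _ (fun o o' => F (o, o'))) /=.
rewrite /pmf [X in _ * X]big_mkcond [X in X * _]big_mkcond big_distrl /=.
by apply: eq_bigr => o _; rewrite big_distrr.
Qed.

Lemma ent_file (th : fidx K' r) : H (fun o => o.2 th) = L%:R.
Proof.
pose W := fun o : Om => o.2 th.
have hsh d : injective (fun o : Om => (o.1, [ffun s => if s == th then o.2 s + d else o.2 s])).
  apply: (can_inj (g := fun o : Om => (o.1, [ffun s => if s == th then o.2 s - d else o.2 s]))).
  case=> u w /=; congr (_, _); apply/ffunP => s; rewrite !ffunE.
  by case: eqP => _; rewrite ?addrK.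
have heq v v' : pmf P W v = pmf P W v'.
  rewrite /pmf (reindex_inj (hsh (v - v'))) /=.
  apply: eq_bigl => o; rewrite /W /= ffunE eqxx.
  by rewrite addrA subr_eq [_ + v]addrC (inj_eq (addrI v)).
have hsum := pmf_sum P1 W.
have hc : #|{: 'rV['F_2]_L}| = (2 ^ L)%N by rewrite card_mx card_Fp // mul1n.
have hv v : pmf P W v = ((2 ^ L)%:R)^-1.
  have : \sum_(t : 'rV['F_2]_L) pmf P W t = pmf P W v *+ (2 ^ L).
    by rewrite -hc -sumr_const; apply: eq_bigr => t _; rewrite (heq t v).
  rewrite hsum => h1.
  have nz : ((2 ^ L)%:R : R) != 0 by rewrite pnatr_eq0 expn_eq0.
  by rewrite -[LHS](mulfK nz) mulr_natr -h1 mul1r.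
rewrite /entropy.
have p0 : ((2 ^ L)%:R : R)^-1 != 0 by rewrite invr_eq0 pnatr_eq0 expn_eq0.
transitivity (- \sum_(t : 'rV['F_2]_L) pmf P W t * log2 (((2 ^ L)%:R : R)^-1)).
  by congr (- _); apply: eq_bigr => t _; rewrite -/W hv (negbTE p0).
rewrite -big_distrl /= hsum mul1r /log2 lnV ?posrE ?ltr0n ?expn_gt0 // natrX lnXn //.
by rewrite mulNr opprK mulrnAl divff // gt_eqF // ln2_gt0.
Qed.



Hypothesis hloc : forall i qv (w w' : files K' r L),
  (forall k, i \in ends k.1 -> w k = w' k) -> ans i qv w = ans i qv w'.
Hypothesis hrel : forall th, cond_entropy P (fun o => o.2 th)
  (fun o => ([ffun i => ans i (q th i o.1) o.2], [ffun i => q th i o.1])) = 0.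
Hypothesis hpriv : forall i th th' x,
  pmf P (fun o => (q th i o.1, ans i (q th i o.1) o.2, stored_at ends i o.2)) x
  = pmf P (fun o => (q th' i o.1, ans i (q th' i o.1) o.2, stored_at ends i o.2)) x.

Lemma Hle (T T' : finType) (X : Om -> T) (Y : Om -> T') : det X Y -> H X <= H Y.
Proof. by move=> h; have := ent_le_det P0 h. Qed.
Lemma Heq (T T' : finType) (X : Om -> T) (Y : Om -> T') : det X Y -> det Y X -> H X = H Y.
Proof. by move=> h1 h2; have := ent_eq_det P0 h1 h2. Qed.

Lemma Hext (T : finType) (X Y : Om -> T) : (forall o, X o = Y o) -> H X = H Y.
Proof. by move=> h; apply: Heq => o o'; rewrite !h. Qed.

Lemma Hswap (T T' : finType) (X : Om -> T) (Y : Om -> T') :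
  H (fun o => (X o, Y o)) = H (fun o => (Y o, X o)).
Proof. by apply: Heq => o o' [-> ->]. Qed.

Lemma Hsubadd (T T' : finType) (X : Om -> T) (Y : Om -> T') :
  H (fun o => (X o, Y o)) <= H X + H Y.
Proof.
have h := ent_submod P0 P1 X Y (fun _ => tt).
have e1 : H (fun o => (X o, Y o, tt)) = H (fun o => (X o, Y o)) by apply: Heq => o o' [-> ->].
have e2 : H (fun o => (X o, tt)) = H X.
  apply: Heq => o o'; [by move=> -> | by case].
have e3 : H (fun o => (Y o, tt)) = H Y.
  apply: Heq => o o'; [by move=> -> | by case].
have := ent_ge0 P0 P1 (fun _ : Om => tt).
rewrite e1 e2 e3 in h; lra.
Qed.

Lemma indep_uw (T T' : finType) (X : Om -> T) (Y : Om -> T') :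
  (forall o o' : Om, o.1 = o'.1 -> X o = X o') ->
  (forall o o' : Om, o.2 = o'.2 -> Y o = Y o') ->
  H (fun o => (X o, Y o)) = H X + H Y.
Proof.
move=> hX hY; apply: (indep_gen (S := xpred0)) => [o o' h1 _|o o' h2].
  exact: hX.
by apply: hY; apply/ffunP => s; apply: h2.
Qed.

Definition res (S : pred (fidx K' r)) (w : files K' r L) : files K' r L :=
  [ffun s => if S s then w s else 0].

Lemma res_eq S w w' : res S w = res S w' <-> (forall s, S s -> w s = w' s).
Proof.
split=> [h s Ss|h].
  by have := congr1 (fun f : files K' r L => f s) h; rewrite /res !ffunE Ss.
by apply/ffunP => s; rewrite /res !ffunE; case: ifP => // /h.
Qed.

Definition Ai th i (o : Om) := ans i (q th i o.1) o.2.
Definition Qi th i (o : Om) := q th i o.1.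
Definition Qv th (o : Om) := [ffun i => q th i o.1].
Definition Vv th i (o : Om) := (q th i o.1, ans i (q th i o.1) o.2, stored_at ends i o.2).

Lemma priv_g th th' i (T : finType) (g : Qt * At * files K' r L -> T) :
  H (fun o => g (Vv th i o)) = H (fun o => g (Vv th' i o)).
Proof.
apply: ent_pmf_eq => t; rewrite !pmf_comp; apply: eq_bigr => v _; exact: hpriv.
Qed.

Lemma HA_priv th th' i : H (Ai th i) = H (Ai th' i).
Proof. exact: (priv_g th th' i (fun v => v.1.2)). Qed.

Lemma Qv_eq th o o' : Qv th o = Qv th o' -> forall i, q th i o.1 = q th i o'.1.
Proof. by move=> h i; have := congr1 (fun f : {ffun 'I_N -> Qt} => f i) h; rewrite !ffunE. Qed.

Section Edge.
Variables (e : 'I_K') (a b : 'I_N).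
Hypothesis hab : a != b.
Hypothesis hends : ends e = [set a; b].

Definition Cset (k : nat) (s : fidx K' r) := (s.1 != e) || (s.2 < k)%N.
Definition Cf k (o : Om) := res (Cset k) o.2.

Definition T th k := H (fun o => (Ai th a o, Ai th b o, Cf k o, Qv th o))
                   - H (fun o => (Cf k o, Qv th o)).
Definition J th k i := H (fun o => (Ai th i o, Cf k o, Qi th i o))
                     - H (fun o => (Cf k o, Qi th i o)).

Lemma J_ge0 th k i : 0 <= J th k i.
Proof.
rewrite /J subr_ge0; apply: Hle => o o' [_ -> ->] //.
Qed.

Lemma cond_red th k i :
  H (fun o => (Ai th i o, (Cf k o, Qv th o))) - H (fun o => (Cf k o, Qv th o)) <= J th k i.
Proof.
have h := ent_submod P0 P1 (Ai th i) (Qv th) (fun o => (Cf k o, Qi th i o)).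
have e1 : H (fun o => (Ai th i o, Qv th o, (Cf k o, Qi th i o)))
        = H (fun o => (Ai th i o, (Cf k o, Qv th o))).
  apply: Heq => o o' /=; rewrite /Qi.
    by case=> -> -> h2; rewrite h2 (Qv_eq h2).
  by case=> -> -> ->.
have e2 : H (fun o => (Ai th i o, (Cf k o, Qi th i o))) = H (fun o => (Ai th i o, Cf k o, Qi th i o)).
  by apply: Heq => o o' /=; case=> -> -> ->.
have e3 : H (fun o => (Qv th o, (Cf k o, Qi th i o))) = H (fun o => (Cf k o, Qv th o)).
  apply: Heq => o o' /=; rewrite /Qi.
    by case=> -> h2; rewrite h2 (Qv_eq h2).
  by case=> -> -> _.
rewrite e1 e2 e3 in h; rewrite /J; lra.
Qed.

Lemma T_le th k : T th k <= J th k a + J th k b.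
Proof.
have h := ent_submod P0 P1 (Ai th a) (Ai th b) (fun o => (Cf k o, Qv th o)).
have e1 : H (fun o => (Ai th a o, Ai th b o, (Cf k o, Qv th o)))
        = H (fun o => (Ai th a o, Ai th b o, Cf k o, Qv th o)).
  by apply: Heq => o o' /=; case=> -> -> -> ->.
have := cond_red th k a; have := cond_red th k b.
rewrite e1 in h; rewrite /T; lra.
Qed.

Lemma cond_eq th k i :
  J th k i <= H (fun o => (Ai th i o, (Cf k o, Qv th o))) - H (fun o => (Cf k o, Qv th o)).
Proof.
have h := ent_submod P0 P1 (fun o : Om => o.2) (Qv th) (fun o => (Ai th i o, (Cf k o, Qi th i o))).
have e1 : H (fun o => (o.2, Qv th o, (Ai th i o, (Cf k o, Qi th i o))))
        = H (fun o => (Qv th o, o.2)).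
  apply: Heq => o o' /=; rewrite /Ai /Qi /Cf.
    by case=> h1 h2; rewrite h2 h1 (Qv_eq h1).
  by case=> -> ->.
have e2 : H (fun o => (o.2, (Ai th i o, (Cf k o, Qi th i o)))) = H (fun o => (Qi th i o, o.2)).
  apply: Heq => o o' /=; rewrite /Ai /Qi /Cf.
    by case=> h1 h2; rewrite h1 h2.
  by case=> -> _ _ ->.
have e3 : H (fun o => (Qv th o, (Ai th i o, (Cf k o, Qi th i o))))
        = H (fun o => (Ai th i o, (Cf k o, Qv th o))).
  apply: Heq => o o' /=; rewrite /Qi.
    by case=> -> -> h2; rewrite h2 (Qv_eq h2).
  by case=> -> -> -> _.
have e4 : H (fun o => (Ai th i o, (Cf k o, Qi th i o))) = H (fun o => (Ai th i o, Cf k o, Qi th i o)).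
  by apply: Heq => o o' /=; case=> -> -> ->.
have i1 : H (fun o => (Qv th o, o.2)) = H (Qv th) + H (fun o : Om => o.2).
  by apply: indep_uw => o o' h1; rewrite /Qv h1.
have i2 : H (fun o => (Qi th i o, o.2)) = H (Qi th i) + H (fun o : Om => o.2).
  by apply: indep_uw => o o' h1; rewrite /Qi h1.
have i3 : H (fun o => (Cf k o, Qi th i o)) = H (Cf k) + H (Qi th i).
  rewrite Hswap addrC; by apply: indep_uw => o o' h1; rewrite /Qi /Cf h1.
have i4 : H (fun o => (Cf k o, Qv th o)) = H (Cf k) + H (Qv th).
  rewrite Hswap addrC; by apply: indep_uw => o o' h1; rewrite /Qv /Cf h1.
rewrite e1 e2 e3 e4 i1 i2 in h; rewrite /J i3 i4; lra.
Qed.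


Lemma J_form th k i :
  J th k i = H (fun o => ((Vv th i o).1.2, res (Cset k) (Vv th i o).2, (Vv th i o).1.1))
           - H (fun o => (res (Cset k) (Vv th i o).2, (Vv th i o).1.1)).
Proof.
pose D := fun o : Om => res (fun s => Cset k s && (i \in ends s.1)) o.2.
pose E := fun o : Om => res (fun s => Cset k s && (i \notin ends s.1)) o.2.
have CDE o o' : (Cf k o = Cf k o') <-> (D o = D o' /\ E o = E o').
  rewrite /Cf /D /E; split.
    by move/res_eq => h; split; apply/res_eq => s /andP[/h].
  case=> /res_eq h1 /res_eq h2; apply/res_eq => s hs.
  by case hi: (i \in ends s.1); [apply: h1 | apply: h2]; rewrite hs ?hi.
have indE (T : finType) (X : Om -> T) :
    (forall o o' : Om, o.1 = o'.1 -> (forall s, i \in ends s.1 -> o.2 s = o'.2 s) -> X o = X o') ->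
    H (fun o => (X o, E o)) = H X + H E.
  move=> hX; apply: (indep_gen (S := fun s => i \in ends s.1)) => // o o' h.
  by rewrite /E; apply/res_eq => s /andP[_ /h].
have DV o : D o = res (Cset k) (Vv th i o).2.
  rewrite /D /Vv /=; apply/ffunP => s; rewrite /res /stored_at !ffunE.
  by case: (Cset k s); case: (i \in ends s.1).
have a1 : H (fun o => (Ai th i o, Cf k o, Qi th i o)) = H (fun o => (Ai th i o, D o, Qi th i o)) + H E.
  rewrite -indE.
    apply: Heq => o o' /=.
      by case=> -> hD -> hE; congr (_, _, _); apply/CDE.
    by case=> -> /CDE[-> ->] ->.
  move=> o o' h1 h2; rewrite /Ai /Qi h1 (hloc _ h2); congr (_, _, _).
  by rewrite /D; apply/res_eq => s /andP[_ /h2].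
have a2 : H (fun o => (Cf k o, Qi th i o)) = H (fun o => (D o, Qi th i o)) + H E.
  rewrite -indE.
    apply: Heq => o o' /=.
      by case=> hD -> hE; congr (_, _); apply/CDE.
    by case=> /CDE[-> ->] ->.
  move=> o o' h1 h2; rewrite /Qi h1; congr (_, _).
  by rewrite /D; apply/res_eq => s /andP[_ /h2].
rewrite /J a1 a2.
rewrite (Hext (X := fun o => (Ai th i o, D o, Qi th i o))
   (Y := fun o => ((Vv th i o).1.2, res (Cset k) (Vv th i o).2, (Vv th i o).1.1))); last first.
  by move=> o; rewrite DV.
rewrite (Hext (X := fun o => (D o, Qi th i o))
   (Y := fun o => (res (Cset k) (Vv th i o).2, (Vv th i o).1.1))); last first.
  by move=> o; rewrite DV.
lra.
Qed.

Lemma J_priv th th' k i : J th k i = J th' k i.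
Proof.
rewrite !J_form.
rewrite (priv_g th th' i (fun v => (v.1.2, res (Cset k) v.2, v.1.1))).
by rewrite (priv_g th th' i (fun v => (res (Cset k) v.2, v.1.1))).
Qed.

Lemma T0_le th : T th 0 <= H (Ai th a) + H (Ai th b).
Proof.
have h1 := Hsubadd (fun o => (Ai th a o, Ai th b o)) (fun o => (Cf 0 o, Qv th o)).
have h2 := Hsubadd (Ai th a) (Ai th b).
have e1 : H (fun o => (Ai th a o, Ai th b o, (Cf 0 o, Qv th o)))
        = H (fun o => (Ai th a o, Ai th b o, Cf 0 o, Qv th o)).
  by apply: Heq => o o' /=; case=> -> -> -> ->.
have := ent_ge0 P0 P1 (fun o => (Cf 0 o, Qv th o)).
rewrite /= e1 in h1; rewrite /T; lra.
Qed.

Lemma Cset_step (t : 'I_r) s : Cset t.+1 s -> ~~ Cset t s -> s = (e, t).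
Proof.
rewrite /Cset negb_or negbK => /orP[h0|h] /andP[/eqP h1 h2].
  by rewrite h1 eqxx in h0.
case: s h h1 h2 => s1 s2 /= h -> h2; congr (_, _); apply: val_inj => /=.
by apply/eqP; rewrite eqn_leq -ltnS h leqNgt h2.
Qed.

Lemma Cset_mono k s : Cset k s -> Cset k.+1 s.
Proof. by rewrite /Cset => /orP[->//|h]; rewrite ltnS ltnW ?orbT. Qed.

Lemma T_ge (t : 'I_r) :
  L%:R + (J (e, t) t.+1 a + J (e, t) t.+1 b) / 2 <= T (e, t) t.
Proof.
set th := (e, t).
have hCth : ~~ Cset t th by rewrite /Cset /th /= eqxx ltnn.
have hCth' : Cset t.+1 th by rewrite /Cset /th /= ltnSn orbT.
have Yr_det o o' : Ai th a o = Ai th a o' -> Ai th b o = Ai th b o' -> Cf t o = Cf t o' ->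
    Qv th o = Qv th o' ->
    ([ffun j => ans j (q th j o.1) o.2], [ffun j => q th j o.1])
    = ([ffun j => ans j (q th j o'.1) o'.2], [ffun j => q th j o'.1]).
  move=> hA hB /res_eq hC hQ; congr (_, _); last exact: hQ.
  apply/ffunP => j; rewrite !ffunE.
  have [->|nja] := eqVneq j a; first exact: hA.
  have [->|njb] := eqVneq j b; first exact: hB.
  rewrite (Qv_eq hQ j); apply: hloc => s hs; apply: hC.
  rewrite /Cset; apply/orP; left; apply/eqP => se.
  by move: hs; rewrite se hends !inE (negbTE nja) (negbTE njb).
have hr := hrel th; rewrite /cond_entropy in hr.
have h := ent_submod P0 P1 (fun o : Om => o.2 th)
   (fun o => (Ai th a o, Ai th b o, Cf t o, Qv th o))
   (fun o => ([ffun i => ans i (q th i o.1) o.2], [ffun i => q th i o.1])).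
have f1 : H (fun o => (o.2 th, (Ai th a o, Ai th b o, Cf t o, Qv th o),
     ([ffun i => ans i (q th i o.1) o.2], [ffun i => q th i o.1])))
   = H (fun o => (o.2 th, (Ai th a o, Ai th b o, Cf t o, Qv th o))).
  apply: Heq => o o' /=.
    by case=> hW hA hB hC hQ; rewrite (Yr_det o o' hA hB hC hQ) hW hA hB hC hQ.
  by case=> -> -> -> -> -> _.
have f2 : H (fun o => ((Ai th a o, Ai th b o, Cf t o, Qv th o),
     ([ffun i => ans i (q th i o.1) o.2], [ffun i => q th i o.1])))
   = H (fun o => (Ai th a o, Ai th b o, Cf t o, Qv th o)).
  apply: Heq => o o' /=.
    by case=> hA hB hC hQ; rewrite (Yr_det o o' hA hB hC hQ) hA hB hC hQ.
  by case=> -> -> -> -> _.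
have f3 : H (fun o => (o.2 th, (Ai th a o, Ai th b o, Cf t o, Qv th o)))
   = H (fun o => (Ai th a o, Ai th b o, Cf t.+1 o, Qv th o)).
  apply: Heq => o o' /=.
    case=> -> -> /res_eq hC ->; congr (_, (_, _, _, _)).
      by apply: hC.
    by apply/res_eq => s /Cset_mono /hC.
  case=> hW -> -> /res_eq hC ->; congr (_, _, _, _).
  apply/res_eq => s hs; case hst: (Cset t s); first exact: hC.
  by rewrite (Cset_step hs (negbT hst)).
have f4 : H (fun o => (Cf t.+1 o, Qv th o)) = H (fun o => (Cf t o, Qv th o)) + L%:R.
  rewrite -(ent_file th).
  rewrite -(indep_gen (S := fun s => s != th) (X := fun o => (Cf t o, Qv th o))
                      (Y := fun o : Om => o.2 th)).
  - apply: Heq => o o' /=.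
      case=> /res_eq hC -> hW; congr (_, _); apply/res_eq => s hs.
      case hst: (Cset t s); first exact: hC.
      by rewrite (Cset_step hs (negbT hst)).
    case=> /res_eq hC ->; congr (_, _, _).
      by apply/res_eq => s /Cset_mono /hC.
    exact: hC.
  - move=> o o' h1 h2; rewrite /Qv h1; congr (_, _); apply/res_eq => s hs.
    by apply: h2; apply: contraNneq hCth => <-.
  - by move=> o o' hh; apply: hh; rewrite negbK.
have f5a : H (fun o => (Ai th a o, (Cf t.+1 o, Qv th o)))
        <= H (fun o => (Ai th a o, Ai th b o, Cf t.+1 o, Qv th o)).
  by apply: Hle => o o' /=; case=> -> _ -> ->.
have f5b : H (fun o => (Ai th b o, (Cf t.+1 o, Qv th o)))
        <= H (fun o => (Ai th a o, Ai th b o, Cf t.+1 o, Qv th o)).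
  by apply: Hle => o o' /=; case=> _ -> -> ->.
have g1 := cond_eq th t.+1 a; have g2 := cond_eq th t.+1 b.
rewrite f1 f2 in h; rewrite /T; lra.
Qed.


Lemma edge_bound (hr : (0 < r)%N) th :
  L%:R * (2 - (2 ^+ r.-1)^-1) <= H (Ai th a) + H (Ai th b).
Proof.
pose t0 : 'I_r := Ordinal hr.
pose tk (k : nat) : 'I_r := insubd t0 k.
have vt k : (k < r)%N -> nat_of_ord (tk k) = k.
  by move=> lt; rewrite /tk val_insubd lt.
have Tge k : (k < r)%N -> L%:R <= T (e, tk k) k.
  move=> lt; have := T_ge (tk k); rewrite vt //.
  have := J_ge0 (e, tk k) k.+1 a; have := J_ge0 (e, tk k) k.+1 b; lra.
have step k : (k.+1 < r)%N ->
    L%:R + T (e, tk k.+1) k.+1 / 2 <= T (e, tk k) k.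
  move=> lt; have := T_ge (tk k); rewrite vt ?(ltn_trans _ lt) //.
  have := T_le (e, tk k.+1) k.+1.
  rewrite (J_priv (e, tk k.+1) (e, tk k) k.+1 a) (J_priv (e, tk k.+1) (e, tk k) k.+1 b).
  lra.
have rp : r = r.-1.+1 by rewrite prednK.
have claim j : (j <= r.-1)%N -> L%:R * (2 - ((2 : R) ^+ j)^-1) <= T (e, tk (r.-1 - j)%N) (r.-1 - j)%N.
  elim: j => [|j IH] hj.
    rewrite expr0 invr1 subn0 (_ : 2 - 1 = 1 :> R); last by rewrite (_ : 2 = 1 + 1 :> R) // addrK.
    by rewrite mulr1; apply: Tge; rewrite {2}rp.
  set k := (r.-1 - j.+1)%N.
  have e1 : (r.-1 - j)%N = k.+1 by rewrite /k subnSK.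
  have hk : (k.+1 < r)%N by rewrite -e1 {2}rp ltnS leq_subr.
  have ih := IH (ltnW hj); rewrite e1 in ih.
  have st := step k hk.
  rewrite exprS invfM !mulrBr.
  have -> : L%:R * (2^-1 * ((2 : R) ^+ j)^-1) = (L%:R * ((2 : R) ^+ j)^-1) / 2.
    by rewrite mulrCA mulrC.
  move: ih; rewrite mulrBr; lra.
have := claim r.-1 (leqnn _); rewrite subnn => c0.
have := T0_le (e, tk 0); rewrite !(HA_priv (e, tk 0) th); lra.
Qed.

End Edge.
End PIR.

Lemma sum_edges (R : realType) (N K' : nat) (ends : 'I_K' -> {set 'I_N}) (h : 'I_N -> R)
  (A : {set 'I_K'}) :
  \sum_(s in A) \sum_(i in ends s) h i = \sum_i (#|[set s in A | i \in ends s]|)%:R * h i.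
Proof.
under eq_bigr do rewrite big_mkcond /=.
rewrite exchange_big /=; apply: eq_bigr => i _.
rewrite -big_mkcondr /= mulr_natl -sumr_const; apply: eq_bigl => s.
by rewrite inE.
Qed.

Unset Implicit Arguments.
Set Strict Implicit.

Theorem theorem2 (R : realType) (N K' r : nat) (ends : 'I_K' -> {set 'I_N}) :
  simple_graph ends -> (0 < K')%N -> (1 <= r)%N ->
  (PIR_capacity R ends r <=
   ((Num.min ((max_degree ends)%:R / K'%:R) ((matching_number ends)%:R^-1))
      / (2 - (2 ^+ r.-1)^-1))%:E)%E.
Proof.
move=> [hcard _] hK hr.
apply: ge_ereal_sup => x [L [U [pU [Qt [At [q [ans [th [hL hs ->]]]]]]]]].
rewrite lee_fin.
case: hs => pU0 pU1 hloc hrel hpriv.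
pose h i := entropy (jointP pU) (Ai q ans th i).
have h0 i : 0 <= h i by have := ent_ge0 (P0 pU0) (P1 K' r L pU1) (Ai q ans th i).
set c : R := 2 - (2 ^+ r.-1)^-1.
have hp : 1 <= (2:R) ^+ r.-1 by rewrite exprn_ege1 // ler1n.
have hi : ((2:R) ^+ r.-1)^-1 <= 1.
  by rewrite invr_le1 // ?unitfE ?gt_eqF // (lt_le_trans ltr01 hp).
have c1 : 1 <= c by rewrite /c; lra.
have c0 : 0 < c by apply: lt_le_trans c1.
have Lp : 0 < (L%:R : R) by rewrite ltr0n.
have edge s : L%:R * c <= \sum_(i in ends s) h i.
  have := hcard s => /eqP /cards2P [a [b [hab hends]]].
  rewrite hends big_setU1 /= ?big_set1; last by rewrite inE.
  exact: (edge_bound pU0 pU1 hloc hrel hpriv hends hr th).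
have hS : \sum_(i : 'I_N) entropy (jointP pU) (fun o => ans i (q th i o.1) o.2) = \sum_i h i by [].
rewrite /PIR_rate hS.
set S := \sum_i h i.
pose D := max_degree ends.
have A1 : L%:R * (K'%:R * c) <= D%:R * S.
  have -> : L%:R * (K'%:R * c) = \sum_(s in [set: 'I_K']) L%:R * c.
    by rewrite sumr_const cardsT card_ord -[RHS]mulr_natr mulrAC mulrA.
  have st : \sum_(s in [set: 'I_K']) L%:R * c <= \sum_(s in [set: 'I_K']) \sum_(i in ends s) h i.
    by apply: ler_sum => s _; exact: edge.
  apply: (le_trans st).
  rewrite sum_edges /S mulr_sumr; apply: ler_sum => i _.
  apply: ler_wpM2r => //; rewrite ler_nat /D /max_degree.
  apply: leq_trans (leq_bigmax i); rewrite /degree.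
  by apply: eq_leq; apply: eq_card => s; rewrite !inE.
have Sp : 0 < S.
  rewrite lt_def; apply/andP; split; last by apply: sumr_ge0.
  apply/eqP => S0; move: A1; rewrite S0 mulr0.
  by apply/negP; rewrite -ltNge !mulr_gt0 // ltr0n.
pose nu := matching_number ends.
have A2 : L%:R * (nu%:R * c) <= S.
  have [M Mm ->] : {M : {set 'I_K'} | is_matching ends M & nu = #|M|}.
    have := @eq_bigmax_cond _ (fun M => is_matching ends M) (fun M => #|M|).
    case => [|M Mm hM]; last by exists M.
    by apply/card_gt0P; exists (finset.set0 : {set 'I_K'}); apply/forall_inP => s; rewrite inE.
  have -> : L%:R * (#|M|%:R * c) = \sum_(s in M) L%:R * c.
    by rewrite sumr_const -[RHS]mulr_natr mulrAC mulrA.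
  have st : \sum_(s in M) L%:R * c <= \sum_(s in M) \sum_(i in ends s) h i.
    by apply: ler_sum => s _; exact: edge.
  apply: (le_trans st).
  rewrite sum_edges /S; apply: ler_sum => i _.
  rewrite -[leRHS]mul1r; apply: ler_wpM2r => //; rewrite (_ : (1:R) = 1%:R) // ler_nat.
  apply/card_le1_eqP => s t; rewrite !inE => /andP[sM iS] /andP[tM iT].
  apply/eqP; apply: contraT; rewrite eq_sym => nst.
  move/forall_inP: Mm => /(_ s sM) /forall_inP /(_ t tM) /implyP /(_ nst) dis.
  by move: (disjointFr dis iS); rewrite iT.
have nu1 : (1 <= nu)%N.
  pose s0 : 'I_K' := Ordinal hK.
  have m1 : is_matching ends [set s0].
    apply/forall_inP => s; rewrite inE => /eqP -> ; apply/forall_inP => t.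
    by rewrite inE => /eqP ->; rewrite eqxx.
  have := @leq_bigmax_cond _ (fun M => is_matching ends M) (fun M => #|M|) [set s0] m1.
  by rewrite cards1.
have Kp : 0 < (K'%:R : R) by rewrite ltr0n.
have nup : 0 < (nu%:R : R) by rewrite ltr0n.
have Kn : (K'%:R : R) != 0 by rewrite gt_eqF.
have cn : c != 0 by rewrite gt_eqF.
have nun : (nu%:R : R) != 0 by rewrite gt_eqF.
have r1 : L%:R / S <= D%:R / K'%:R / c.
  rewrite ler_pdivrMr //.
  have -> : D%:R / K'%:R / c * S = (D%:R * S) / (K'%:R * c).
    by field; rewrite Kn cn.
  by rewrite ler_pdivlMr ?mulr_gt0.
have r2 : L%:R / S <= nu%:R^-1 / c.
  rewrite ler_pdivrMr //.
  have -> : nu%:R^-1 / c * S = S / (nu%:R * c).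
    by field; rewrite nun cn.
  by rewrite ler_pdivlMr ?mulr_gt0.
rewrite -/D -/nu; rewrite /Num.min.
by case: ifP.
Qed.
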